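(* Let $Z$ be a convex subset of a real vector space $V$ and let $y\in Z$. For all $x_1,x_2\in Z$ with $x_1\leq_C y$ and $x_2\leq_C y$, and all $0\leq s\leq 1$, $$\frac{1}{t_y\big(sx_1+(1-s)x_2\big)}\leq\frac{s}{t_y(x_1)}+\frac{1-s}{t_y(x_2)}.$$
   Context: For $x,y\in Z$ write $x\leq_C y$ if there exist $z\in Z$ and $0<t\leq 1$ with $y=tx+(1-t)z$. The weight function $t_y:Z\to[0,1]$ is defined by $t_y(x)=\sup\{0\leq t<1 : \frac{y-tx}{1-t}\in Z\}$. *)

(* Defs.v *)
From HB Require Import structures.
From mathcomp Require Import all_boot all_order all_algebra.
From mathcomp Require Import boolp classical_sets reals.
Set Implicit Arguments. Unset Strict Implicit. Unset Printing Implicit Defensive.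
Import Order.TTheory GRing.Theory Num.Theory.
Local Open Scope ring_scope.
Local Open Scope classical_set_scope.

Definition convex_subset (R : realType) (V : lmodType R) (Z : set V) : Prop :=
  forall x y : V, Z x -> Z y -> forall s : R, 0 <= s <= 1 ->
    Z (s *: x + (1 - s) *: y).

Definition leC (R : realType) (V : lmodType R) (Z : set V) (x y : V) : Prop :=
  exists z : V, exists t : R, Z z /\ 0 < t <= 1 /\ y = t *: x + (1 - t) *: z.

Definition weight (R : realType) (V : lmodType R) (Z : set V) (y x : V) : R :=
  sup [set t : R | 0 <= t < 1 /\ Z ((1 - t)^-1 *: (y - t *: x))].

(* Main.v *)
Require Import Defs.
From HB Require Import structures.
From mathcomp Require Import all_boot all_order all_algebra.
From mathcomp Require Import boolp classical_sets reals.
From mathcomp Require Import ring lra.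
Import Order.TTheory GRing.Theory Num.Theory.
Local Open Scope ring_scope.
Local Open Scope classical_set_scope.

Section S.
Variables (R : realType) (V : lmodType R).

Lemma wset_ub (Z : set V) y x :
  has_ubound [set t : R | 0 <= t < 1 /\ Z ((1 - t)^-1 *: (y - t *: x))].
Proof. exists 1 => t [/andP[_ /ltW]]. by []. Qed.

Lemma w_ge (Z : set V) y x t : 0 <= t < 1 -> Z ((1 - t)^-1 *: (y - t *: x)) ->
  t <= weight Z y x.
Proof. move=> h1 h2; exact: (ub_le_sup (wset_ub Z y x)). Qed.

Lemma w_ge0 (Z : set V) y x : Z y -> 0 <= weight Z y x.
Proof. move=> hy; apply: w_ge; first by rewrite lexx ltr01.
by rewrite scale0r subr0 subr0 invr1 scale1r. Qed.

Lemma w_gt0 (Z : set V) y x : Z y -> leC Z x y -> 0 < weight Z y x.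
Proof.
move=> hy [z [t [hz [/andP[t0 t1] ey]]]].
have [tl1|te1] := ltP t 1.
  apply: (lt_le_trans t0); apply: w_ge; first by rewrite (ltW t0) tl1.
  have h : 1 - t != 0 by rewrite subr_eq0 eq_sym lt_eqF.
  by rewrite ey addrAC subrr add0r scalerA mulVf // scale1r.
have e1 : t = 1 by apply/le_anti; rewrite t1 te1.
have exy : y = x by rewrite ey e1 subrr scale0r addr0 scale1r.
apply: (@lt_le_trans _ _ (1/2 : R)); first by rewrite divr_gt0.
apply: w_ge; first by apply/andP; split; lra.
rewrite -exy.
have -> : y - 1/2 *: y = (1 - 1/2) *: y by rewrite scalerBl scale1r.
rewrite scalerA mulVf ?scale1r //.
have h : (1 - 1/2 : R) = 1/2 by lra.
by rewrite h; apply: lt0r_neq0; rewrite divr_gt0.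
Qed.

Lemma sup_bound (S : set R) c d : (forall t, S t -> 0 <= t) -> S 0 -> 0 < sup S -> 0 <= c ->
  (forall t, S t -> 0 < t -> d <= c / t) -> d <= c / sup S.
Proof.
move=> hS S0 sp c0 h.
have [d0|dp] := leP d 0; first by apply: (le_trans d0); rewrite divr_ge0 // ltW.
have : sup S <= c / d.
  apply: ge_sup; first by exists 0.
  move=> t St; have [t0|tp] := leP t 0.
    by apply: (le_trans t0); rewrite divr_ge0 // ltW.
  have := h t St tp; rewrite ler_pdivlMr // ler_pdivlMr //.
  by rewrite mulrC.
by rewrite ler_pdivlMr // ler_pdivlMr // mulrC.
Qed.


Lemma comb_id (x1 x2 z1 z2 : V) (a b t s t1 t2 c1 c2 : R) :
  a * t1 = t * s -> b * t2 = t * (1 - s) ->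
  a *: (t1 *: x1 + c1 *: z1) + b *: (t2 *: x2 + c2 *: z2) - t *: (s *: x1 + (1 - s) *: x2)
  = (a * c1) *: z1 + (b * c2) *: z2.
Proof.
move=> ha hb.
rewrite !scalerDr !scalerA ha hb.
rewrite opprD addrACA -addrA addrACA.
by rewrite subrr add0r [X in _ + X]addrAC subrr add0r.
Qed.

Lemma key (Z : set V) y x1 x2 s t1 t2 : convex_subset Z -> 0 <= s <= 1 ->
  0 < t1 < 1 -> 0 < t2 < 1 ->
  Z ((1 - t1)^-1 *: (y - t1 *: x1)) -> Z ((1 - t2)^-1 *: (y - t2 *: x2)) ->
  1 < s / t1 + (1 - s) / t2 /\
  Z ((1 - (s / t1 + (1 - s) / t2)^-1)^-1 *:
       (y - (s / t1 + (1 - s) / t2)^-1 *: (s *: x1 + (1 - s) *: x2))).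
Proof.
move=> hZ /andP[s0 s1] /andP[t10 t11] /andP[t20 t21] hz1 hz2.
set K := s / t1 + (1 - s) / t2.
have t1n : t1 != 0 by rewrite gt_eqF.
have t2n : t2 != 0 by rewrite gt_eqF.
have K1 : 1 < K.
  have -> : K = 1 + (s * (1 - t1) / t1 + (1 - s) * (1 - t2) / t2).
    by rewrite /K; field; rewrite t1n t2n.
  suff H : 0 < s * (1 - t1) / t1 + (1 - s) * (1 - t2) / t2 by lra.
  have [sp|s0'] := ltP 0 s.
    apply: ltr_pwDl; first by rewrite divr_gt0 // mulr_gt0 //; lra.
    by rewrite divr_ge0 // ?mulr_ge0 //; lra.
  have -> : s = 0 by apply/le_anti; rewrite s0 s0'.
  by rewrite mul0r mul0r add0r subr0 mul1r divr_gt0 //; lra.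
split=> //.
set t := K^-1.
have tp : 0 < t by rewrite invr_gt0; lra.
have tl1 : t < 1 by rewrite invf_lt1 //; lra.
have tKe : t * K = 1 by rewrite mulVf // gt_eqF //; lra.
set a := s * t / t1. set b := (1 - s) * t / t2.
have ha : a * t1 = t * s by rewrite /a mulfVK // mulrC.
have hb : b * t2 = t * (1 - s) by rewrite /b mulfVK // mulrC.
have hab : a + b = 1.
  by rewrite /a /b -[RHS]tKe /K; field; rewrite t1n t2n.
set z1 := (1 - t1)^-1 *: (y - t1 *: x1) in hz1.
set z2 := (1 - t2)^-1 *: (y - t2 *: x2) in hz2.
have ey1 : y = t1 *: x1 + (1 - t1) *: z1.
  have hn : 1 - t1 != 0 by rewrite subr_eq0 eq_sym lt_eqF.
  by rewrite /z1 scalerA divff // scale1r addrC subrK.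
have ey2 : y = t2 *: x2 + (1 - t2) *: z2.
  have hn : 1 - t2 != 0 by rewrite subr_eq0 eq_sym lt_eqF.
  by rewrite /z2 scalerA divff // scale1r addrC subrK.
have t1n' : 1 - t != 0 by rewrite gt_eqF //; lra.
set mu := a * (1 - t1) / (1 - t).
have hmu : 1 - mu = b * (1 - t2) / (1 - t).
  rewrite /mu; apply: (mulIf t1n'); rewrite mulrBl !mulfVK // mul1r.
  have -> : b = 1 - a by rewrite -hab addrC addKr.
  rewrite !mulrBr mulr1 ha mulr1.
  have hb' : (1 - a) * t2 = t * (1 - s) by rewrite -hb -hab addrC addKr.
  rewrite hb'; lra.
have a0 : 0 <= a.
  by rewrite /a; apply: divr_ge0; [apply: mulr_ge0 => //; exact: ltW | exact: ltW].
have b0 : 0 <= b.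
  by rewrite /b; apply: divr_ge0; [apply: mulr_ge0; [lra | exact: ltW] | exact: ltW].
have -> : (1 - t)^-1 *: (y - t *: (s *: x1 + (1 - s) *: x2)) = mu *: z1 + (1 - mu) *: z2.
  have -> : y = a *: y + b *: y by rewrite -scalerDl hab scale1r.
  rewrite {1}ey1 ey2 comb_id // hmu /mu -!mulrA ![_ / (1 - t)]mulrC !mulrA.
  by rewrite scalerDr !scalerA; congr (_ *: _ + _ *: _); ring.
apply: hZ => //; apply/andP; split.
  rewrite /mu; apply: divr_ge0; [apply: mulr_ge0 => //; lra | lra].
rewrite -subr_ge0 hmu; apply: divr_ge0; [apply: mulr_ge0 => //; lra | lra].
Qed.
Lemma w_bound (Z : set V) y x c d : Z y -> 0 < weight Z y x -> 0 <= c ->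
  (forall t, (0 <= t < 1 /\ Z ((1 - t)^-1 *: (y - t *: x))) -> 0 < t -> d <= c / t) ->
  d <= c / weight Z y x.
Proof.
move=> hy wp c0 h; apply: sup_bound => //.
- by move=> t [/andP[]].
- split; first by apply/andP; split; [exact: lexx | exact: ltr01].
  by rewrite scale0r !subr0 invr1 scale1r.
Qed.
End S.
Arguments w_bound {R V Z y x c d}.
Arguments w_ge {R V Z y x t}.
Arguments w_gt0 {R V Z y x}.
Arguments sup_bound {R S c d}.
Arguments key {R V Z y x1 x2 s t1 t2}.

Theorem lemma1 (R : realType) (V : lmodType R) (Z : set V) (y : V)
  (hZ : convex_subset Z) (hy : Z y) (x1 x2 : V) (hx1 : Z x1) (hx2 : Z x2)
  (h1 : leC Z x1 y) (h2 : leC Z x2 y) (s : R) (hs : 0 <= s <= 1) :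
  1 / weight Z y (s *: x1 + (1 - s) *: x2)
    <= s / weight Z y x1 + (1 - s) / weight Z y x2.
Proof.
set x := s *: x1 + (1 - s) *: x2.
have [s0 s1] := andP hs.
have kb : forall t1 t2, 0 < t1 -> 0 < t2 ->
    (0 <= t1 < 1 /\ Z ((1 - t1)^-1 *: (y - t1 *: x1))) ->
    (0 <= t2 < 1 /\ Z ((1 - t2)^-1 *: (y - t2 *: x2))) ->
    1 / weight Z y x <= s / t1 + (1 - s) / t2.
  move=> t1 t2 t1p t2p [/andP[_ t1l] z1] [/andP[_ t2l] z2].
  have ht1 : 0 < t1 < 1 by rewrite t1p t1l.
  have ht2 : 0 < t2 < 1 by rewrite t2p t2l.
  have [K1 hz] := key hZ hs ht1 ht2 z1 z2.
  set K := s / t1 + (1 - s) / t2 in K1 hz *.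
  have Kp : 0 < K by lra.
  have tw : K^-1 <= weight Z y x.
    apply: w_ge => //; apply/andP; split; first by rewrite invr_ge0 ltW.
    by rewrite invf_lt1.
  have tp : 0 < K^-1 by rewrite invr_gt0.
  rewrite mul1r -[K]invrK lef_pV2 ?posrE //; exact: (lt_le_trans tp).
have w1p := w_gt0 hy h1.
have w2p := w_gt0 hy h2.
have S0 : forall x', 0 <= 0 < 1 /\ Z ((1 - 0)^-1 *: (y - 0 *: x')).
  move=> x'; split; first by apply/andP; split; [exact: lexx | exact: ltr01].
  by rewrite scale0r !subr0 invr1 scale1r.
have Sge : forall x' t, (0 <= t < 1 /\ Z ((1 - t)^-1 *: (y - t *: x'))) -> 0 <= t.
  by move=> x' t [/andP[]].
have stepA : forall t2, 0 < t2 -> (0 <= t2 < 1 /\ Z ((1 - t2)^-1 *: (y - t2 *: x2))) ->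
    1 / weight Z y x - (1 - s) / t2 <= s / weight Z y x1.
  move=> t2 t2p St2.
  apply: (w_bound hy w1p s0) => t1 St1 t1p.
  have := kb t1 t2 t1p t2p St1 St2; lra.
have stepB : 1 / weight Z y x - s / weight Z y x1 <= (1 - s) / weight Z y x2.
  apply: (w_bound hy w2p); first by lra.
  move=> t2 St2 t2p; have := stepA t2 t2p St2; lra.
lra.
Qed.
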